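(* Let $W^\pm=(\alpha_1^\pm,\rho_1^\pm,\rho_2^\pm,u_1^\pm,u_2^\pm)$ with $\alpha_1^\pm\in(0,1)$, $\rho_i^\pm>0$, and $S\in\mathbb{R}$ satisfy the Rankine–Hugoniot conditions \begin{align*} &[\![\alpha_1\rho u]\!]=S[\![\alpha_1\rho]\!],\quad [\![\alpha_1\rho_1u_1]\!]=S[\![\alpha_1\rho_1]\!],\quad [\![\rho u]\!]=S[\![\rho]\!],\\ &[\![\alpha_1\rho_1u_1^2+\alpha_2\rho_2u_2^2+\alpha_1p_1+\alpha_2p_2]\!]=S[\![\alpha_1\rho_1u_1+\alpha_2\rho_2u_2]\!],\quad [\![\tfrac12(u_1^2-u_2^2)+\Psi_1-\Psi_2]\!]=S[\![u_1-u_2]\!], \end{align*} and assume $Q:=-\rho^-(u^--S)<0$. Let $\nu\in\{1,2\}$, assume $\rho\mapsto\rho\,a_\nu(\rho)$ is strictly increasing on $(0,\infty)$, and assume $\rho_\nu^-<\rho_\nu^+$. Let $D$ be the energy dissipation \[ D=\sum_{i=1}^2\Big(-S\,[\![\alpha_i\rho_i(\varphi_i+\tfrac12u_i^2)]\!]+[\![\alpha_i\rho_iu_i(\Psi_i+\tfrac12u_i^2)]\!]\Big). \] (a) If $S=u_\nu^+-a_\nu(\rho_\nu^+)$ (the characteristic speed $u_\nu-a_\nu$ on the right coincides with the discontinuity), then $D<0$, i.e. the energy admissibility condition $D\le0$ holds. (b) If $S=u_\nu^--a_\nu(\rho_\nu^-)$ (the characteristic speed $u_\nu-a_\nu$ on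 the left coincides with the discontinuity), then $D>0$, i.e. the energy admissibility condition is violated.
   Context: For $i=1,2$, $p_i:(0,\infty)\to\mathbb{R}$ is smooth with $p_i'>0$, $a_i(\rho)=\sqrt{p_i'(\rho)}$; $\varphi_i$ is an antiderivative of $\rho\mapsto p_i(\rho)/\rho^2$ and $\Psi_i(\rho)=\varphi_i(\rho)+p_i(\rho)/\rho$. For a state: $\alpha_2=1-\alpha_1$, $\rho=\alpha_1\rho_1+\alpha_2\rho_2$, $c_i=\alpha_i\rho_i/\rho$, $u=c_1u_1+c_2u_2$, $p_i=p_i(\rho_i)$, $\varphi_i=\varphi_i(\rho_i)$, $\Psi_i=\Psi_i(\rho_i)$. $[\![f]\!]=f(W^+)-f(W^-)$. This concerns a shock of one phase lying inside a rarefaction fan of phase $\nu$ of the one-dimensional barotropic conservative SHTC two-phase system, the admissibility criterion being $D\le0$. *)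

(* Defs.v *)
From Stdlib Require Export Reals.
From Coquelicot Require Export Coquelicot.
Open Scope R_scope.

Record state := mkState { st_a1 : R; st_r1 : R; st_r2 : R; st_u1 : R; st_u2 : R }.

(* Phase-indexed components; phase index i is 1 or 2 (anything else is read as 2). *)
Definition alph (W : state) (i : nat) : R :=
  match i with 1%nat => st_a1 W | _ => 1 - st_a1 W end.
Definition rh (W : state) (i : nat) : R :=
  match i with 1%nat => st_r1 W | _ => st_r2 W end.
Definition vel (W : state) (i : nat) : R :=
  match i with 1%nat => st_u1 W | _ => st_u2 W end.

Definition mrho (W : state) : R := alph W 1 * rh W 1 + alph W 2 * rh W 2.
Definition cfr (W : state) (i : nat) : R := alph W i * rh W i / mrho W.
Definition mu (W : state) : R := cfr W 1 * vel W 1 + cfr W 2 * vel W 2.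

Definition jump (f : state -> R) (Wm Wp : state) : R := f Wp - f Wm.

Definition sound (p : nat -> R -> R) (i : nat) (r : R) : R := sqrt (Derive (p i) r).
Definition Psi (p phi : nat -> R -> R) (i : nat) (r : R) : R := phi i r + p i r / r.

Definition pr (p : nat -> R -> R) (W : state) (i : nat) : R := p i (rh W i).

Definition eos_ok (p phi : nat -> R -> R) (i : nat) : Prop :=
  (forall (n : nat) (x : R), 0 < x -> ex_derive_n (p i) n x) /\
  (forall x, 0 < x -> 0 < Derive (p i) x) /\
  (forall x, 0 < x -> is_derive (phi i) x (p i x / x ^ 2)).

Definition admissible_state (W : state) : Prop :=
  0 < st_a1 W < 1 /\ 0 < st_r1 W /\ 0 < st_r2 W.

Definition RH (p phi : nat -> R -> R) (Wm Wp : state) (S : R) : Prop :=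
  jump (fun W => alph W 1 * mrho W * mu W) Wm Wp = S * jump (fun W => alph W 1 * mrho W) Wm Wp /\
  jump (fun W => alph W 1 * rh W 1 * vel W 1) Wm Wp = S * jump (fun W => alph W 1 * rh W 1) Wm Wp /\
  jump (fun W => mrho W * mu W) Wm Wp = S * jump mrho Wm Wp /\
  jump (fun W => alph W 1 * rh W 1 * vel W 1 ^ 2 + alph W 2 * rh W 2 * vel W 2 ^ 2
                 + alph W 1 * pr p W 1 + alph W 2 * pr p W 2) Wm Wp
    = S * jump (fun W => alph W 1 * rh W 1 * vel W 1 + alph W 2 * rh W 2 * vel W 2) Wm Wp /\
  jump (fun W => / 2 * (vel W 1 ^ 2 - vel W 2 ^ 2) + Psi p phi 1 (rh W 1) - Psi p phi 2 (rh W 2)) Wm Wp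
    = S * jump (fun W => vel W 1 - vel W 2) Wm Wp.

Definition Dterm (p phi : nat -> R -> R) (Wm Wp : state) (S : R) (i : nat) : R :=
  - S * jump (fun W => alph W i * rh W i * (phi i (rh W i) + / 2 * vel W i ^ 2)) Wm Wp
  + jump (fun W => alph W i * rh W i * vel W i * (Psi p phi i (rh W i) + / 2 * vel W i ^ 2)) Wm Wp.

Definition Ddiss (p phi : nat -> R -> R) (Wm Wp : state) (S : R) : R :=
  Dterm p phi Wm Wp S 1 + Dterm p phi Wm Wp S 2.

(* Main.v *)
Require Import Defs.
From Stdlib Require Import Lra.

Definition Hf (p phi : nat -> R -> R) i j x := phi i x + p i x / x + / 2 * j ^ 2 / x ^ 2.

Lemma Hmvt p phi i j a b : eos_ok p phi i -> 0 < a -> a < b ->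
  exists c, a < c < b /\
   Hf p phi i j b - Hf p phi i j a = ((Derive (p i) c * c ^ 2 - j ^ 2) / c ^ 3) * (b - a).
Proof.
  intros [Hs [Hp Hphi]] Ha Hab.
  destruct (MVT_cor2 (Hf p phi i j) (fun c => (Derive (p i) c * c ^ 2 - j ^ 2) / c ^ 3) a b Hab)
    as [c [Hc1 Hc2]].
  - intros c Hc. apply is_derive_Reals.
    assert (Hc0 : 0 < c) by lra.
    assert (Dp : is_derive (p i) c (Derive (p i) c)).
    { apply Derive_correct. exact (Hs 1%nat c Hc0). }
    assert (Dph := Hphi c Hc0).
    assert (D1 := is_derive_div (p i) (fun x => x) c _ _ Dp (is_derive_id c) ltac:(lra)).
    assert (D2 := is_derive_inv (fun x => x ^ 2) c _ (is_derive_pow (fun x => x) 2 c 1 (is_derive_id c)) ltac:(simpl; nra)).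
    unfold Hf.
    eapply is_derive_ext.
    { intro t. instantiate (1 := fun t => plus (plus (phi i t) (p i t / t)) (/2 * j^2 * / t ^ 2)).
      simpl. unfold plus; simpl. unfold Rdiv. ring. }
    replace ((Derive (p i) c * c ^ 2 - j ^ 2) / c ^ 3) with
      (plus (plus (p i c / c ^ 2) ((Derive (p i) c * c - p i c * 1) / c ^ 2)) (/2 * j^2 * (- (INR 2 * 1 * c ^ Init.Nat.pred 2) / (c ^ 2) ^ 2))).
    2:{ unfold plus; simpl. field. lra. }
    apply (@is_derive_plus R_AbsRing R_NormedModule). apply (@is_derive_plus R_AbsRing R_NormedModule). exact Dph. exact D1.
    apply (is_derive_scal (fun t => / t ^ 2)). exact D2.
  - exists c. split; [lra| exact Hc1].
Qed.
Lemma alg (A r1m r1p r2m r2p u1m u1p u2m u2p S P1m P1p P2m P2p F1m F1p F2m F2p : R) :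
  0 < A < 1 -> 0 < r1m -> 0 < r1p -> 0 < r2m -> 0 < r2p ->
  r1p * (u1p - S) = r1m * (u1m - S) ->
  r2p * (u2p - S) = r2m * (u2m - S) ->
  (A * r1p * u1p ^ 2 + (1 - A) * r2p * u2p ^ 2 + A * P1p + (1 - A) * P2p)
   - (A * r1m * u1m ^ 2 + (1 - A) * r2m * u2m ^ 2 + A * P1m + (1 - A) * P2m)
   = S * ((A * r1p * u1p + (1 - A) * r2p * u2p) - (A * r1m * u1m + (1 - A) * r2m * u2m)) ->
  (/ 2 * (u1p ^ 2 - u2p ^ 2) + (F1p + P1p / r1p) - (F2p + P2p / r2p))
   - (/ 2 * (u1m ^ 2 - u2m ^ 2) + (F1m + P1m / r1m) - (F2m + P2m / r2m))
   = S * ((u1p - u2p) - (u1m - u2m)) ->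
  let D := (- S * ((A * r1p * (F1p + / 2 * u1p ^ 2)) - (A * r1m * (F1m + / 2 * u1m ^ 2)))
            + ((A * r1p * u1p * ((F1p + P1p / r1p) + / 2 * u1p ^ 2)) - (A * r1m * u1m * ((F1m + P1m / r1m) + / 2 * u1m ^ 2))))
         + (- S * (((1 - A) * r2p * (F2p + / 2 * u2p ^ 2)) - ((1 - A) * r2m * (F2m + / 2 * u2m ^ 2)))
            + (((1 - A) * r2p * u2p * ((F2p + P2p / r2p) + / 2 * u2p ^ 2)) - ((1 - A) * r2m * u2m * ((F2m + P2m / r2m) + / 2 * u2m ^ 2)))) in
  let M := A * r1m * (u1m - S) + (1 - A) * r2m * (u2m - S) in
  D = M * ((F1p + P1p / r1p + / 2 * (u1p - S) ^ 2) - (F1m + P1m / r1m + / 2 * (u1m - S) ^ 2)) /\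
  D = M * ((F2p + P2p / r2p + / 2 * (u2p - S) ^ 2) - (F2m + P2m / r2m + / 2 * (u2m - S) ^ 2)).
Proof.
  intros HA H1m H1p H2m H2p E1 E2 E4 E5 D M.
  assert (U1 : u1p = S + r1m * (u1m - S) / r1p).
  { apply (Rmult_eq_reg_l r1p); [|lra]. replace (r1p * (S + r1m * (u1m - S) / r1p)) with (r1p*S + r1m*(u1m-S)) by (field; lra). lra. }
  assert (U2 : u2p = S + r2m * (u2m - S) / r2p).
  { apply (Rmult_eq_reg_l r2p); [|lra]. replace (r2p * (S + r2m * (u2m - S) / r2p)) with (r2p*S + r2m*(u2m-S)) by (field; lra). lra. }
  subst u1p u2p.
  assert (P1 : P1p = ((A * r1m * u1m ^ 2 + (1 - A) * r2m * u2m ^ 2 + A * P1m + (1 - A) * P2m)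
   + S * ((A * r1p * (S + r1m * (u1m - S) / r1p) + (1 - A) * r2p * (S + r2m * (u2m - S) / r2p)) - (A * r1m * u1m + (1 - A) * r2m * u2m))
   - (A * r1p * (S + r1m * (u1m - S) / r1p) ^ 2 + (1 - A) * r2p * (S + r2m * (u2m - S) / r2p) ^ 2 + (1 - A) * P2p)) / A)
    by (apply (Rmult_eq_reg_l A); [|lra]; match goal with |- _ = A * (?X / A) => replace (A * (X / A)) with X by (field; lra) end; lra).
  subst P1p.
  assert (F1 : F1p = S * (((S + r1m * (u1m - S) / r1p) - (S + r2m * (u2m - S) / r2p)) - (u1m - u2m))
     + (/ 2 * (u1m ^ 2 - u2m ^ 2) + (F1m + P1m / r1m) - (F2m + P2m / r2m))
     - (/ 2 * ((S + r1m * (u1m - S) / r1p) ^ 2 - (S + r2m * (u2m - S) / r2p) ^ 2) - (F2p + P2p / r2p))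
     - (((A * r1m * u1m ^ 2 + (1 - A) * r2m * u2m ^ 2 + A * P1m + (1 - A) * P2m)
   + S * ((A * r1p * (S + r1m * (u1m - S) / r1p) + (1 - A) * r2p * (S + r2m * (u2m - S) / r2p)) - (A * r1m * u1m + (1 - A) * r2m * u2m))
   - (A * r1p * (S + r1m * (u1m - S) / r1p) ^ 2 + (1 - A) * r2p * (S + r2m * (u2m - S) / r2p) ^ 2 + (1 - A) * P2p)) / A) / r1p) by lra.
  subst F1p. unfold D, M. split; field; lra.
Qed.

Lemma final p phi nu rm rp um up S M D :
  eos_ok p phi nu -> 0 < rm -> rm < rp -> 0 < M ->
  rp * (up - S) = rm * (um - S) ->
  D = M * ((Psi p phi nu rp + / 2 * (up - S) ^ 2) - (Psi p phi nu rm + / 2 * (um - S) ^ 2)) ->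
  (forall x y, 0 < x -> x < y -> x * sound p nu x < y * sound p nu y) ->
  (S = up - sound p nu rp -> D < 0) /\ (S = um - sound p nu rm -> D > 0).
Proof.
  intros Heos Hrm Hr HM Ej ED Hmono.
  set (j := rp * (up - S)).
  assert (Hp : Psi p phi nu rp + / 2 * (up - S) ^ 2 = Hf p phi nu j rp)
    by (unfold Hf, Psi, j; field; lra).
  assert (Hm : Psi p phi nu rm + / 2 * (um - S) ^ 2 = Hf p phi nu j rm)
    by (unfold Hf, Psi, j; rewrite Ej; field; lra).
  rewrite Hp, Hm in ED.
  destruct (Hmvt p phi nu j rm rp Heos Hrm Hr) as [c [Hc Hdiff]].
  rewrite Hdiff in ED.
  assert (Hc0 : 0 < c) by lra.
  destruct Heos as [_ [Hpos _]].
  assert (Sq : Derive (p nu) c * c ^ 2 = (c * sound p nu c) ^ 2).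
  { unfold sound. replace ((c * sqrt (Derive (p nu) c)) ^ 2) with (c^2 * (sqrt (Derive (p nu) c) * sqrt (Derive (p nu) c))) by ring.
    rewrite sqrt_sqrt; [ring | specialize (Hpos c Hc0); lra]. }
  assert (s0 : forall x, 0 <= sound p nu x) by (intro; apply sqrt_pos).
  assert (c3 : 0 < c ^ 3) by (apply pow_lt; lra).
  split; intro HS.
  - assert (Hj : j = rp * sound p nu rp) by (unfold j; rewrite HS; ring).
    assert (L := Hmono c rp Hc0 (proj2 Hc)).
    assert (L0 : 0 <= c * sound p nu c) by (apply Rmult_le_pos; [lra | apply s0]).
    assert (K : Derive (p nu) c * c ^ 2 - j ^ 2 < 0) by (rewrite Sq, Hj; nra).
    assert (K2 : (Derive (p nu) c * c ^ 2 - j ^ 2) / c ^ 3 < 0).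
    { unfold Rdiv. apply Rmult_neg_pos; [lra | apply Rinv_0_lt_compat; lra]. }
    rewrite ED. assert (0 < rp - rm) by lra.
    set (f := (Derive (p nu) c * c ^ 2 - j ^ 2) / c ^ 3) in *.
    assert (f * (rp - rm) < 0) by nra. nra.
  - assert (Hj : j = rm * sound p nu rm) by (unfold j; rewrite Ej, HS; ring).
    assert (L := Hmono rm c Hrm (proj1 Hc)).
    assert (L0 : 0 <= rm * sound p nu rm) by (apply Rmult_le_pos; [lra | apply s0]).
    assert (K : Derive (p nu) c * c ^ 2 - j ^ 2 > 0) by (rewrite Sq, Hj; nra).
    assert (K2 : (Derive (p nu) c * c ^ 2 - j ^ 2) / c ^ 3 > 0).
    { unfold Rdiv. apply Rmult_lt_0_compat; [lra | apply Rinv_0_lt_compat; lra]. }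
    rewrite ED. assert (0 < rp - rm) by lra.
    set (f := (Derive (p nu) c * c ^ 2 - j ^ 2) / c ^ 3) in *.
    assert (f * (rp - rm) > 0) by nra. nra.
Qed.

Theorem mainTheorem4 (p phi : nat -> R -> R) (Wm Wp : state) (S : R) (nu : nat) :
  eos_ok p phi 1 -> eos_ok p phi 2 ->
  admissible_state Wm -> admissible_state Wp ->
  RH p phi Wm Wp S ->
  - mrho Wm * (mu Wm - S) < 0 ->
  (nu = 1%nat \/ nu = 2%nat) ->
  (forall x y, 0 < x -> x < y -> x * sound p nu x < y * sound p nu y) ->
  rh Wm nu < rh Wp nu ->
  (S = vel Wp nu - sound p nu (rh Wp nu) -> Ddiss p phi Wm Wp S < 0) /\
  (S = vel Wm nu - sound p nu (rh Wm nu) -> Ddiss p phi Wm Wp S > 0).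
Proof.
  intros Eo1 Eo2 Am Ap Hrh HQ Hnu Hmono Hr.
  assert (MM : forall W, admissible_state W -> mrho W * mu W =
     st_a1 W * st_r1 W * st_u1 W + (1 - st_a1 W) * st_r2 W * st_u2 W).
  { intros W [HA [H1 H2]]. unfold mu, cfr, mrho, alph, rh, vel. field.
    nra. }
  assert (MR : forall W, mrho W = st_a1 W * st_r1 W + (1 - st_a1 W) * st_r2 W) by reflexivity.
  unfold RH, jump in Hrh.
  rewrite !MM in Hrh by assumption.
  rewrite !Rmult_assoc, !MM in Hrh by assumption.
  assert (HQ' : 0 < mrho Wm * mu Wm - S * mrho Wm).
  { assert (- mrho Wm * (mu Wm - S) = -(mrho Wm * mu Wm - S * mrho Wm)) by ring. lra. }
  clear HQ. rewrite MM in HQ' by assumption.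
  destruct Hrh as [E1 [E2 [E3 [E4 E5]]]].
  destruct Wm as [am r1m r2m u1m u2m]; destruct Wp as [ap r1p r2p u1p u2p].
  destruct Am as [HAm [H1m H2m]]; destruct Ap as [HAp [H1p H2p]].
  unfold mrho, alph, rh, vel, pr in *; simpl in *.
  assert (Hx : ap * (ap * r1p * u1p + (1 - ap) * r2p * u2p - S * (ap * r1p + (1 - ap) * r2p))
              = am * (am * r1m * u1m + (1 - am) * r2m * u2m - S * (am * r1m + (1 - am) * r2m))) by lra.
  assert (Hx2 : (ap * r1p * u1p + (1 - ap) * r2p * u2p - S * (ap * r1p + (1 - ap) * r2p))
              = (am * r1m * u1m + (1 - am) * r2m * u2m - S * (am * r1m + (1 - am) * r2m))) by lra.
  rewrite Hx2 in Hx.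
  assert (Ha : ap = am).
  { set (X := am * r1m * u1m + (1 - am) * r2m * u2m - S * (am * r1m + (1 - am) * r2m)) in *.
    assert ((ap - am) * X = 0) by lra.
    destruct (Rmult_integral _ _ H) as [H'|H']; lra. }
  subst ap.
  assert (J1 : r1p * (u1p - S) = r1m * (u1m - S)).
  { apply (Rmult_eq_reg_l am); [lra | lra]. }
  assert (J2 : r2p * (u2p - S) = r2m * (u2m - S)).
  { apply (Rmult_eq_reg_l (1 - am)); [lra | lra]. }
  assert (E4' : (am * r1p * u1p ^ 2 + (1 - am) * r2p * u2p ^ 2 + am * p 1%nat r1p + (1 - am) * p 2%nat r2p)
   - (am * r1m * u1m ^ 2 + (1 - am) * r2m * u2m ^ 2 + am * p 1%nat r1m + (1 - am) * p 2%nat r2m)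
   = S * ((am * r1p * u1p + (1 - am) * r2p * u2p) - (am * r1m * u1m + (1 - am) * r2m * u2m))) by lra.
  assert (E5' : (/ 2 * (u1p ^ 2 - u2p ^ 2) + (phi 1%nat r1p + p 1%nat r1p / r1p) - (phi 2%nat r2p + p 2%nat r2p / r2p))
   - (/ 2 * (u1m ^ 2 - u2m ^ 2) + (phi 1%nat r1m + p 1%nat r1m / r1m) - (phi 2%nat r2m + p 2%nat r2m / r2m))
   = S * ((u1p - u2p) - (u1m - u2m))) by (unfold Psi in E5; lra).
  destruct (alg am r1m r1p r2m r2p u1m u1p u2m u2p S _ _ _ _ _ _ _ _ HAm H1m H1p H2m H2p J1 J2 E4' E5') as [Da1 Da2].
  set (M := am * r1m * (u1m - S) + (1 - am) * r2m * (u2m - S)) in *.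
  assert (HM : 0 < M) by (unfold M; lra).
  assert (DD : Ddiss p phi {| st_a1 := am; st_r1 := r1m; st_r2 := r2m; st_u1 := u1m; st_u2 := u2m |}
       {| st_a1 := am; st_r1 := r1p; st_r2 := r2p; st_u1 := u1p; st_u2 := u2p |} S =
     (- S * ((am * r1p * (phi 1%nat r1p + / 2 * u1p ^ 2)) - (am * r1m * (phi 1%nat r1m + / 2 * u1m ^ 2)))
            + ((am * r1p * u1p * ((phi 1%nat r1p + p 1%nat r1p / r1p) + / 2 * u1p ^ 2)) - (am * r1m * u1m * ((phi 1%nat r1m + p 1%nat r1m / r1m) + / 2 * u1m ^ 2))))
         + (- S * (((1 - am) * r2p * (phi 2%nat r2p + / 2 * u2p ^ 2)) - ((1 - am) * r2m * (phi 2%nat r2m + / 2 * u2m ^ 2)))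
            + (((1 - am) * r2p * u2p * ((phi 2%nat r2p + p 2%nat r2p / r2p) + / 2 * u2p ^ 2)) - ((1 - am) * r2m * u2m * ((phi 2%nat r2m + p 2%nat r2m / r2m) + / 2 * u2m ^ 2))))).
  { reflexivity. }
  rewrite DD.
  destruct Hnu; subst nu; simpl in *.
  - apply (final p phi 1%nat r1m r1p u1m u1p S M); auto; try lra.
  - apply (final p phi 2%nat r2m r2p u2m u2p S M); auto; try lra.
Qed.
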